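(* Let $0\to\mathcal H_{\mathcal Q}\xrightarrow{inc}\mathcal E_{\mathcal R}\xrightarrow{proj}\mathcal L_{\mathcal N}\to0$ be a non-abelian extension of Nijenhuis Lie conformal algebras. Then the sequence $$1\longrightarrow\mathrm{Aut}^{\mathcal L,\mathcal H}_{\mathcal H}(\mathcal E_{\mathcal R})\xrightarrow{inc}\mathrm{Aut}_{\mathcal H}(\mathcal E_{\mathcal R})\xrightarrow{\Pi}\mathrm{Aut}(\mathcal H_{\mathcal Q})\times\mathrm{Aut}(\mathcal L_{\mathcal N})\xrightarrow{\mathfrak W}H^2_{nab}(\mathcal L_{\mathcal N},\mathcal H_{\mathcal Q})$$ is exact.
   Context: All spaces over $\mathbb C$. A Lie conformal algebra is a $\mathbb C[\partial]$-module with a $\mathbb C$-bilinear $\lambda$-bracket satisfying $[\partial a_\lambda b]=-\lambda[a_\lambda b]$, $[a_\lambda\partial b]=(\partial+\lambda)[a_\lambda b]$, $[a_\lambda b]=-[b_{-\partial-\lambda}a]$, $[a_\lambda[b_\mu c]]=[[a_\lambda b]_{\lambda+\mu}c]+[b_\mu[a_\lambda c]]$. A Nijenhuis operator is a $\mathbb C[\partial]$-linear $\mathcal N$ with $[\mathcal N(p)_\lambda\mathcal N(q)]=\mathcal N([\mathcal N(p)_\lambda q]+[p_\lambda\mathcal N(q)]-\mathcal N([p_\lambda q]))$; Nijenhuis Lie conformal algebras $\mathcal L_{\mathcal N}=(\mathcal L,[\cdot_\lambda\cdot]_{\mathcal L},\mathcal N)$, $\mathcal H_{\mathcal Q}=(\mathcal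 H,[\cdot_\lambda\cdot]_{\mathcal H},\mathcal Q)$, $\mathcal E_{\mathcal R}=(\mathcal E,[\cdot_\lambda\cdot]_{\mathcal E},\mathcal R)$ are Lie conformal algebras with Nijenhuis operators; morphisms are bracket-preserving $\mathbb C[\partial]$-linear maps intertwining the operators; $\mathrm{Aut}$ denotes bijective self-morphisms. A non-abelian extension is a short exact sequence of such morphisms as displayed, split as $\mathbb C[\partial]$-modules, with $\mathcal H\subset\mathcal E$ and $\mathcal R|_{\mathcal H}=\mathcal Q$; fix a $\mathbb C[\partial]$-linear section $s$ of $proj$ and the induced $\chi_\lambda(p,q)=[s(p)_\lambda s(q)]_{\mathcal E}-s([p_\lambda q]_{\mathcal L})$, $\rho(p)_\lambda h=[s(p)_\lambda h]_{\mathcal E}$, $\Phi(p)=\mathcal R(s(p))-s(\mathcal N(p))$. Non-abelian $2$-cocycles: triples $(\chi_\lambda:\mathcal L\otimes\mathcal L\to\mathcal H[\lambda],\rho:\mathcal L\otimes\mathcal H\to\mathcal H[\lambda],\Phi:\mathcal L\to\mathcal H)$ with (i) $\rho(p)_\lambda\rho(q)_\mu h-\rho(q)_\mu\rho(p)_\lambda h-\rho([p_\lambda q]_{\mathcal L})_{\lambda+\mu}h=[\chi_\lambda(p,q)_{\lambda+\mu}h]_{\mathcal H}$; (ii) $\rho(p)_\lambda\chi_\mu(q,r)+\rho(q)_\mu\chi_\lambda(r,p)+\rho(r)_{-\partial-\lambda-\mu}\chi_\lambda(p,q)-\chi_{\lambda+\mu}([q_\mu r]_{\mathcal L},p)-\chi_{\lambda+\mu}([r_{-\partial-\lambda}p]_{\mathcal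 L},q)-\chi_{\lambda+\mu}([p_\lambda q]_{\mathcal L},r)=0$; (iii) $\rho(\mathcal Np)_\lambda\mathcal Q(h)=\mathcal Q(\rho(\mathcal Np)_\lambda h+\rho(p)_\lambda\mathcal Q(h)-\mathcal Q(\rho(p)_\lambda h))+\mathcal Q([\Phi(p)_\lambda h]_{\mathcal H})-[\Phi(p)_\lambda\mathcal Q(h)]_{\mathcal H}$; (iv) $\chi_\lambda(\mathcal Np,\mathcal Nq)-\mathcal Q(\chi_\lambda(\mathcal Np,q)+\chi_\lambda(p,\mathcal Nq)-\mathcal Q\chi_\lambda(p,q))-\Phi([\mathcal N(p)_\lambda q]_{\mathcal L}+[p_\lambda\mathcal N(q)]_{\mathcal L}-\mathcal N[p_\lambda q]_{\mathcal L})+\rho(\mathcal Np)_\lambda\Phi(q)-\rho(\mathcal Nq)_{-\partial-\lambda}\Phi(p)+\mathcal Q(\rho(q)_{-\partial-\lambda}\Phi(p)-\rho(p)_\lambda\Phi(q)+\Phi([p_\lambda q]_{\mathcal L}))+[\Phi(p)_\lambda\Phi(q)]_{\mathcal H}=0$, for all $p,q,r\in\mathcal L$, $h\in\mathcal H$. Equivalence via a linear $\tau:\mathcal L\to\mathcal H$: $\rho(p)_\lambda h-\rho'(p)_\lambda h=[\tau(p)_\lambda h]_{\mathcal H}$, $\chi_\lambda(p,q)-\chi'_\lambda(p,q)=[\tau(p)_\lambda\tau(q)]_{\mathcal H}-\tau([p_\lambda q]_{\mathcal L})+\rho'(p)_\lambda\tau(q)-\rho'(q)_{-\partial-\lambda}\tau(p)$,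 $\Phi(p)-\Phi'(p)=\mathcal Q\tau(p)-\tau\mathcal N(p)$; $H^2_{nab}(\mathcal L_{\mathcal N},\mathcal H_{\mathcal Q})$ = equivalence classes. $\mathrm{Aut}_{\mathcal H}(\mathcal E_{\mathcal R})=\{\gamma\in\mathrm{Aut}(\mathcal E_{\mathcal R}):\gamma(\mathcal H)=\mathcal H\}$; $\Pi(\gamma)=(\gamma|_{\mathcal H},proj\circ\gamma\circ s)$; $\mathrm{Aut}^{\mathcal L,\mathcal H}_{\mathcal H}(\mathcal E_{\mathcal R})=\{\gamma\in\mathrm{Aut}_{\mathcal H}(\mathcal E_{\mathcal R}):\Pi(\gamma)=(\mathrm{Id}_{\mathcal H},\mathrm{Id}_{\mathcal L})\}$ with its inclusion $inc$. The Wells map is $\mathfrak W(\alpha,\beta)=[(\chi^{(\alpha,\beta)}_\lambda,\rho^{(\alpha,\beta)},\Phi^{(\alpha,\beta)})-(\chi_\lambda,\rho,\Phi)]$ where $\chi^{(\alpha,\beta)}_\lambda(p,q)=\alpha\chi_\lambda(\beta^{-1}p,\beta^{-1}q)$, $\rho^{(\alpha,\beta)}(p)_\lambda h=\alpha(\rho(\beta^{-1}p)_\lambda\alpha^{-1}h)$, $\Phi^{(\alpha,\beta)}(p)=\alpha\Phi(\beta^{-1}p)$. Exactness at $\mathrm{Aut}(\mathcal H_{\mathcal Q})\times\mathrm{Aut}(\mathcal L_{\mathcal N})$ means: the image of $\Pi$ equals the set of pairs $(\alpha,\beta)$ at which $\mathfrak W$ is trivial, i.e. for which $(\chi^{(\alpha,\beta)}_\lambda,\rho^{(\alpha,\beta)},\Phi^{(\alpha,\beta)})$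 is equivalent to $(\chi_\lambda,\rho,\Phi)$; exactness at the other terms means $inc$ is injective and $\ker\Pi=\mathrm{Aut}^{\mathcal L,\mathcal H}_{\mathcal H}(\mathcal E_{\mathcal R})$. *)

(* Defs.v *)
(* Lie conformal algebras over an arbitrary field K
   (the paper works over C). *)
From HB Require Import structures.
From mathcomp Require Import all_boot all_order all_algebra.
Set Implicit Arguments. Unset Strict Implicit. Unset Printing Implicit Defensive.
Import GRing.Theory.
Local Open Scope ring_scope.

Section NijenhuisLCA.
Variable K : fieldType.

(* An element of V[λ] is represented by its list of coefficients
   [c_0; c_1; ...] meaning  Σ_n λ^n c_n ; equalities of polynomials are
   always stated coefficientwise (so trailing zeros are irrelevant). *)
Definition pco (V : lmodType K) (p : seq V) (n : nat) : V := nth 0 p n.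

(* coefficient of λ^k in  p(-∂-λ) = Σ_n (-∂-λ)^n c_n
   = Σ_n Σ_k C(n,k) (-λ)^k (-∂)^(n-k) c_n *)
Definition psubst (V : lmodType K) (d : V -> V) (p : seq V) (k : nat) : V :=
  \sum_(n < size p)
     ('C(n, k)%:R * (-1) ^+ k) *: iter (n - k) (fun x => - d x) (pco p n).

Record NLCA := {
  car :> lmodType K;
  der : car -> car;
  brk : car -> car -> seq car;   (* [a_λ b] as a polynomial in λ *)
  nij : car -> car }.

Definition lc (A : NLCA) (a b : A) (n : nat) : A := pco (brk a b) n.

Definition dlinear (V W : lmodType K) (dV : V -> V) (dW : W -> W) (f : V -> W) :=
  [/\ forall x y, f (x + y) = f x + f y,
      forall (k : K) x, f (k *: x) = k *: f x
    & forall x, f (dV x) = dW (f x)].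

Definition is_LCA (A : NLCA) : Prop :=
  (forall x y : A, der (x + y) = der x + der y) /\
  (forall (k : K) (x : A), der (k *: x) = k *: der x) /\
  (forall (a a' b : A) n, lc (a + a') b n = lc a b n + lc a' b n) /\
  (forall (k : K) (a b : A) n, lc (k *: a) b n = k *: lc a b n) /\
  (forall (a b b' : A) n, lc a (b + b') n = lc a b n + lc a b' n) /\
  (forall (k : K) (a b : A) n, lc a (k *: b) n = k *: lc a b n) /\
  (* [∂a_λ b] = -λ[a_λ b] *)
  (forall (a b : A) n,
      lc (der a) b n = - (if n is m.+1 then lc a b m else 0)) /\
  (* [a_λ ∂b] = (∂+λ)[a_λ b] *)
  (forall (a b : A) n,
      lc a (der b) n = der (lc a b n) + (if n is m.+1 then lc a b m else 0)) /\
  (* [a_λ b] = -[b_{-∂-λ} a] *)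
  (forall (a b : A) k, lc a b k = - psubst (@der A) (brk b a) k) /\
  (* [a_λ[b_μ c]] = [[a_λ b]_{λ+μ} c] + [b_μ[a_λ c]],
     compared at the coefficient of λ^p μ^q *)
  (forall (a b c : A) p q,
      lc a (lc b c q) p =
        \sum_(i < p.+1) 'C(p - i + q, q)%:R *: lc (lc a b i) c (p - i + q)
      + lc b (lc a c p) q).

Definition is_Nijenhuis (A : NLCA) : Prop :=
  dlinear (@der A) (@der A) (@nij A) /\
  forall (p q : A) n,
    lc (nij p) (nij q) n = nij (lc (nij p) q n + lc p (nij q) n - nij (lc p q n)).

Definition is_NLCA (A : NLCA) : Prop := is_LCA A /\ is_Nijenhuis A.

Definition nmorph (A B : NLCA) (f : A -> B) : Prop :=
  [/\ dlinear (@der A) (@der B) f,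
      (forall (a b : A) n, f (lc a b n) = lc (f a) (f b) n)
    & forall a : A, f (nij a) = nij (f a)].

Definition is_aut (A : NLCA) (alpha alphai : A -> A) : Prop :=
  [/\ nmorph alpha, cancel alpha alphai & cancel alphai alpha].

Section Extension.
Variables (H E L : NLCA) (inc : H -> E) (proj : E -> L) (s : L -> E).

Definition AutH (g : E -> E) : Prop :=
  [/\ nmorph g, bijective g,
      (forall h, exists h', g (inc h) = inc h')
    & (forall h', exists h, g (inc h) = inc h')].

Definition PiEq (g : E -> E) (alpha : H -> H) (beta : L -> L) : Prop :=
  (forall h, g (inc h) = inc (alpha h)) /\ (forall p, proj (g (s p)) = beta p).

Definition AutLH (g : E -> E) : Prop := AutH g /\ PiEq g id id.

End Extension.

(* Equivalence of (χ,ρ,Φ) and (χ',ρ',Φ') in the sense of non-abelian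
   2-cocycles, witnessed by a C[∂]-linear τ : L -> H. *)
Definition nab_equiv (H L : NLCA)
    (chi chi' : L -> L -> seq H) (rho rho' : L -> H -> seq H)
    (phi phi' : L -> H) : Prop :=
  exists tau : L -> H,
  [/\ dlinear (@der L) (@der H) tau,
      (forall p h n, pco (rho p h) n - pco (rho' p h) n = lc (tau p) h n),
      (forall p q n,
          pco (chi p q) n - pco (chi' p q) n =
            lc (tau p) (tau q) n - tau (lc p q n)
            + pco (rho' p (tau q)) n - psubst (@der H) (rho' q (tau p)) n)
    & (forall p, phi p - phi' p = nij (tau p) - tau (nij p))].

End NijenhuisLCA.

(* Main.v *)
Require Import Defs.
From HB Require Import structures.
From mathcomp Require Import all_boot all_order all_algebra.
From Stdlib Require Import ClassicalEpsilon.
Import GRing.Theory.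
Local Open Scope ring_scope.

Module Aux.
Set Implicit Arguments. Unset Strict Implicit. Unset Printing Implicit Defensive.


Section Gen.
Variable K : fieldType.

Lemma dl0 (V W : lmodType K) dV dW (f : V -> W) : dlinear dV dW f -> f 0 = 0.
Proof.
case=> _ fZ _; have -> : (0 : V) = 0 *: 0 by rewrite scale0r.
by rewrite fZ scale0r.
Qed.

Lemma dlN (V W : lmodType K) dV dW (f : V -> W) : dlinear dV dW f -> forall x, f (- x) = - f x.
Proof. by case=> _ fZ _ x; rewrite -scaleN1r fZ scaleN1r. Qed.

Lemma dlB (V W : lmodType K) dV dW (f : V -> W) : dlinear dV dW f -> forall x y, f (x - y) = f x - f y.
Proof. by move=> hf x y; case: (hf) => fD _ _; rewrite fD (dlN hf). Qed.

Lemma iter0 (V : lmodType K) (d : V -> V) : d 0 = 0 -> forall m, iter m (fun x => - d x) 0 = 0.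
Proof. by move=> d0; elim=> //= m ->; rewrite d0 oppr0. Qed.

Lemma iterD (V : lmodType K) (d : V -> V) : (forall x y, d (x + y) = d x + d y) ->
  forall m x y, iter m (fun x => - d x) (x + y) = iter m (fun x => - d x) x + iter m (fun x => - d x) y.
Proof. by move=> dD; elim=> //= m IH x y; rewrite IH dD opprD. Qed.

Lemma iter_map (V W : lmodType K) dV dW (f : V -> W) : dlinear dV dW f ->
  forall m x, f (iter m (fun x => - dV x) x) = iter m (fun x => - dW x) (f x).
Proof. move=> hf; case: (hf) => _ _ fd; by elim=> //= m IH x; rewrite -IH (dlN hf) fd. Qed.

Lemma pco_map (V W : lmodType K) (f : V -> W) : f 0 = 0 ->
  forall p n, pco (map f p) n = f (pco p n).
Proof. by move=> f0; elim=> [|a p IH] [|n] //=; rewrite /pco /= ?f0. Qed.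

Lemma psubstE (V : lmodType K) (d : V -> V) p k N : d 0 = 0 -> (size p <= N)%N ->
  psubst d p k = \sum_(n < N) ('C(n, k)%:R * (-1) ^+ k) *: iter (n - k) (fun x => - d x) (pco p n).
Proof.
move=> d0 le; rewrite /psubst (big_ord_widen N (fun n => ('C(n, k)%:R * (-1) ^+ k) *: iter (n - k) (fun x => - d x) (pco p n)) le).
rewrite big_mkcond /=; apply: eq_bigr => i _; case: ifP => // /negbT; rewrite -leqNgt => hi.
by rewrite /pco nth_default // iter0 // scaler0.
Qed.

Lemma psubst_eq (V : lmodType K) (d : V -> V) p1 p2 k : d 0 = 0 -> pco p1 =1 pco p2 ->
  psubst d p1 k = psubst d p2 k.
Proof.
move=> d0 e.
rewrite (@psubstE _ _ _ _ (maxn (size p1) (size p2))) ?leq_maxl //.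
rewrite (@psubstE _ _ p2 _ (maxn (size p1) (size p2))) ?leq_maxr //.
by apply: eq_bigr => i _; rewrite e.
Qed.

Lemma psubst_add (V : lmodType K) (d : V -> V) p1 p2 p3 k :
  (forall x y, d (x + y) = d x + d y) -> (forall n, pco p1 n = pco p2 n + pco p3 n) ->
  psubst d p1 k = psubst d p2 k + psubst d p3 k.
Proof.
move=> dD e.
have d0 : d 0 = 0.
  by have := congr1 (fun z => z - d 0) (dD 0 0); rewrite addr0 subrr addrK => <-.
set N := maxn (size p1) (maxn (size p2) (size p3)).
have h1 : (size p1 <= N)%N by rewrite leq_maxl.
have h2 : (size p2 <= N)%N by rewrite /N !leq_max leqnn orbT.
have h3 : (size p3 <= N)%N by rewrite /N !leq_max leqnn !orbT.
rewrite (@psubstE _ _ p1 _ N) // (@psubstE _ _ p2 _ N) // (@psubstE _ _ p3 _ N) //.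
by rewrite -big_split; apply: eq_bigr => i _; rewrite e iterD // scalerDr.
Qed.

Lemma psubst_map (V W : lmodType K) dV dW (f : V -> W) p k : dlinear dV dW f ->
  f (psubst dV p k) = psubst dW (map f p) k.
Proof.
move=> hf; case: (hf) => fD fZ _.
rewrite /psubst size_map (big_morph f fD (dl0 hf)).
by apply: eq_bigr => i _; rewrite fZ (iter_map hf) (pco_map (dl0 hf)).
Qed.

End Gen.

Lemma Z1 (V : zmodType) (a b c d e f : V) :
  (a + b + (c + d) - (e + f)) - (a - e) = d - f + b + c.
Proof.
rewrite ?(opprB, opprD, opprK) !addrA [LHS](ACl ((1*8)*(5*7)*(4*6*2*3))) /=.
by rewrite subrr addNr !add0r.
Qed.
Lemma Z2 (V : zmodType) (a b c d : V) : (a + b - (c + d)) - (a - c) = b - d.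
Proof.
rewrite ?(opprB, opprD, opprK) !addrA [LHS](ACl ((1*6)*(3*5)*(2*4))) /=.
by rewrite subrr addNr !add0r.
Qed.
Lemma Z3 (V : zmodType) (a b c d e : V) : a + b + (c + d) = e + (a - e + b + c + d).
Proof.
rewrite !addrA [RHS](ACl ((1*3)*(2*4*5*6))) /=.
by rewrite subrr add0r.
Qed.
Lemma Z4 (V : zmodType) (t a b c : V) : t + ((a - t + b) + c) = b + (a + c).
Proof.
rewrite !addrA [LHS](ACl ((1*3)*(4*2*5))) /=.
by rewrite subrr add0r.
Qed.
Lemma Z5 (V : zmodType) (t l rT pT c x ra pa pb d : V) :
  t + ((l - t + rT - pT + c) + (ra + x) - (pa + pb) + d) =
  c + (rT + ra) - (pT + pa) + (l + x + (- pb + d)).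
Proof.
rewrite ?(opprB, opprD, opprK) !addrA [LHS](ACl ((1*3)*(6*4*7*5*9*2*8*10*11))) /=.
by rewrite subrr add0r.
Qed.


Section Acc.
Variables (K : fieldType) (A : NLCA K).
Hypothesis LA : is_LCA A.
Lemma derD (x y : A) : der (x + y) = der x + der y. Proof. by case: LA. Qed.
Lemma derZ k (x : A) : der (k *: x) = k *: der x. Proof. by case: LA => _ []. Qed.
Lemma lcDl (a a' b : A) n : lc (a + a') b n = lc a b n + lc a' b n. Proof. by case: LA => _ [_ []]. Qed.
Lemma lcDr (a b b' : A) n : lc a (b + b') n = lc a b n + lc a b' n. Proof. by case: LA => _ [_ [_ [_ []]]]. Qed.
Lemma lc_skew (a b : A) k : lc a b k = - psubst (@der _ A) (brk b a) k.
Proof. by case: LA => _ [_ [_ [_ [_ [_ [_ [_ []]]]]]]]. Qed.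
Lemma der_dl : dlinear (@der _ A) (@der _ A) (@der _ A).
Proof. by split=> //; [apply: derD | apply: derZ]. Qed.
Lemma der0 : der (0 : A) = 0. Proof. exact: dl0 der_dl. Qed.
Lemma derB (x y : A) : der (x - y) = der x - der y. Proof. exact: (dlB der_dl x y). Qed.
Lemma lcZl k (a b : A) n : lc (k *: a) b n = k *: lc a b n. Proof. by case: LA => _ [_ [_ []]]. Qed.
Lemma lcNl (a b : A) n : lc (- a) b n = - lc a b n.
Proof. by rewrite -scaleN1r lcZl scaleN1r. Qed.
Lemma lcBl (a a' b : A) n : lc (a - a') b n = lc a b n - lc a' b n.
Proof. by rewrite lcDl lcNl. Qed.
End Acc.

Lemma inv_morph (K : fieldType) (A : NLCA K) (f fi : A -> A) : is_aut f fi -> nmorph fi.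
Proof.
case=> [[[fD fZ fd] fl fn] fK fiK]; have fI := can_inj fK.
split; first split.
- by move=> x y; apply: fI; rewrite fD !fiK.
- by move=> k x; apply: fI; rewrite fZ !fiK.
- by move=> x; apply: fI; rewrite fd !fiK.
- by move=> a b n; apply: fI; rewrite fl !fiK.
- by move=> a; apply: fI; rewrite fn !fiK.
Qed.


Section Main.
Variables (K : fieldType) (H E L : NLCA K)
    (inc : H -> E) (proj : E -> L) (s : L -> E)
    (chi : L -> L -> seq H) (rho : L -> H -> seq H) (phi : L -> H).
Hypotheses (NH : is_NLCA H) (NE : is_NLCA E) (NL : is_NLCA L)
  (Minc : nmorph inc) (Mproj : nmorph proj) (Iinc : injective inc)
  (Hker : forall e : E, proj e = 0 <-> exists h : H, e = inc h)
  (Ds : dlinear (@der _ L) (@der _ E) s) (Hs : forall p, proj (s p) = p)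
  (Hchi : forall p q n, inc (pco (chi p q) n) = lc (s p) (s q) n - s (lc p q n))
  (Hrho : forall p h n, inc (pco (rho p h) n) = lc (s p) (inc h) n)
  (Hphi : forall p, inc (phi p) = nij (s p) - s (nij p)).
Variable hof : E -> H.
Hypothesis Hhof : forall e, inc (hof e) = e - s (proj e).

Let LE := NE.1. Let LH := NH.1.
Lemma inc_dl : dlinear (@der _ H) (@der _ E) inc. Proof. by case: Minc. Qed.
Lemma incD x y : inc (x + y) = inc x + inc y. Proof. by case: Minc => [[]]. Qed.
Lemma incZ k x : inc (k *: x) = k *: inc x. Proof. by case: Minc => [[]]. Qed.
Lemma incd x : inc (der x) = der (inc x). Proof. by case: Minc => [[]]. Qed.
Lemma inc0 : inc 0 = 0. Proof. by case: Minc => /dl0. Qed.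
Lemma incB x y : inc (x - y) = inc x - inc y. Proof. by case: Minc => hd _ _; exact: (dlB hd x y). Qed.
Lemma incN x : inc (- x) = - inc x. Proof. by case: Minc => hd _ _; exact: (dlN hd x). Qed.
Lemma inclc a b n : inc (lc a b n) = lc (inc a) (inc b) n. Proof. by case: Minc. Qed.
Lemma incnij a : inc (nij a) = nij (inc a). Proof. by case: Minc. Qed.
Lemma projD x y : proj (x + y) = proj x + proj y. Proof. by case: Mproj => [[]]. Qed.
Lemma projZ k x : proj (k *: x) = k *: proj x. Proof. by case: Mproj => [[]]. Qed.
Lemma projd x : proj (der x) = der (proj x). Proof. by case: Mproj => [[]]. Qed.
Lemma projB x y : proj (x - y) = proj x - proj y. Proof. by case: Mproj => hd _ _; exact: (dlB hd x y). Qed.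
Lemma projlc a b n : proj (lc a b n) = lc (proj a) (proj b) n. Proof. by case: Mproj. Qed.
Lemma projnij a : proj (nij a) = nij (proj a). Proof. by case: Mproj. Qed.
Lemma sD x y : s (x + y) = s x + s y. Proof. by case: Ds. Qed.
Lemma sZ k x : s (k *: x) = k *: s x. Proof. by case: Ds. Qed.
Lemma sd x : s (der x) = der (s x). Proof. by case: Ds. Qed.
Lemma s0 : s 0 = 0. Proof. exact: dl0 Ds. Qed.
Lemma sB x y : s (x - y) = s x - s y. Proof. exact: (dlB Ds x y). Qed.
Lemma proj_inc h : proj (inc h) = 0. Proof. by apply/Hker; exists h. Qed.
Lemma hof_inc h : hof (inc h) = h. Proof. by apply: Iinc; rewrite Hhof proj_inc s0 subr0. Qed.
Lemma hof_s p : hof (s p) = 0. Proof. by apply: Iinc; rewrite Hhof Hs subrr inc0. Qed.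
Lemma s_proj e : s (proj e) = e - inc (hof e). Proof. by rewrite Hhof opprB addrC subrK. Qed.
Lemma decomp e : e = s (proj e) + inc (hof e). Proof. by rewrite Hhof addrC subrK. Qed.
Lemma hofD x y : hof (x + y) = hof x + hof y.
Proof. by apply: Iinc; rewrite incD !Hhof projD sD opprD addrACA. Qed.
Lemma hofZ k x : hof (k *: x) = k *: hof x.
Proof. by apply: Iinc; rewrite incZ !Hhof projZ sZ scalerBr. Qed.
Lemma hofd x : hof (der x) = der (hof x).
Proof. by apply: Iinc; rewrite incd !Hhof projd sd derB. Qed.
Lemma hof_si p h : hof (s p + inc h) = h.
Proof. by rewrite hofD hof_s hof_inc add0r. Qed.
Lemma proj_si p h : proj (s p + inc h) = p.
Proof. by rewrite projD Hs proj_inc addr0. Qed.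
Lemma s_lc p q n : s (lc p q n) = lc (s p) (s q) n - inc (pco (chi p q) n).
Proof. by rewrite Hchi opprB addrC subrK. Qed.
Lemma s_nij p : s (nij p) = nij (s p) - inc (phi p).
Proof. by rewrite Hphi opprB addrC subrK. Qed.

Lemma lc_inc_s x q n : lc (inc x) (s q) n = - inc (psubst (@der _ H) (rho q x) n).
Proof.
rewrite (lc_skew LE) (psubst_map _ _ inc_dl); congr (- _).
apply: psubst_eq; first exact: der0.
by move=> m; rewrite (pco_map inc0) Hrho.
Qed.

Section Aut.
Variables (g g' : E -> E).
Hypotheses (Mg : nmorph g) (gK : cancel g g') (g'K : cancel g' g)
  (gi : forall h, exists h', g (inc h) = inc h')
  (gi' : forall h', exists h, g (inc h) = inc h').
Lemma gD x y : g (x + y) = g x + g y. Proof. by case: Mg => [[]]. Qed.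
Lemma gZ k x : g (k *: x) = k *: g x. Proof. by case: Mg => [[]]. Qed.
Lemma gd x : g (der x) = der (g x). Proof. by case: Mg => [[]]. Qed.
Lemma gB x y : g (x - y) = g x - g y. Proof. by case: Mg => hd _ _; exact: (dlB hd x y). Qed.
Lemma glc a b n : g (lc a b n) = lc (g a) (g b) n. Proof. by case: Mg. Qed.
Lemma gnij a : g (nij a) = nij (g a). Proof. by case: Mg. Qed.
Lemma g'B x y : g' (x - y) = g' x - g' y.
Proof. by apply: (can_inj gK); rewrite gB !g'K. Qed.
Definition alpha h := hof (g (inc h)).
Definition alphai h := hof (g' (inc h)).
Definition beta p := proj (g (s p)).
Definition betai p := proj (g' (s p)).
Lemma inc_alpha h : inc (alpha h) = g (inc h).
Proof. by rewrite /alpha; case: (gi h) => h' ->; rewrite hof_inc. Qed.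
Lemma inc_alphai h : inc (alphai h) = g' (inc h).
Proof. by rewrite /alphai; case: (gi' h) => h0 <-; rewrite gK hof_inc. Qed.
Lemma proj_g_inc h : proj (g (inc h)) = 0. Proof. by rewrite -inc_alpha proj_inc. Qed.
Lemma proj_g'_inc h : proj (g' (inc h)) = 0. Proof. by rewrite -inc_alphai proj_inc. Qed.

Lemma alpha_aut : is_aut alpha alphai.
Proof.
split; first split; first split.
- by move=> x y; apply: Iinc; rewrite !(incD, inc_alpha) gD.
- by move=> k x; apply: Iinc; rewrite !(incZ, inc_alpha) gZ.
- by move=> x; apply: Iinc; rewrite !(incd, inc_alpha) gd.
- by move=> a b n; apply: Iinc; rewrite !(inclc, inc_alpha) glc.
- by move=> a; apply: Iinc; rewrite !(incnij, inc_alpha) gnij.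
- by move=> h; apply: Iinc; rewrite inc_alphai inc_alpha gK.
- by move=> h; apply: Iinc; rewrite inc_alpha inc_alphai g'K.
Qed.

Lemma beta_aut : is_aut beta betai.
Proof.
split; first split; first split.
- by move=> x y; rewrite /beta sD gD projD.
- by move=> k x; rewrite /beta sZ gZ projZ.
- by move=> x; rewrite /beta sd gd projd.
- by move=> a b n; rewrite /beta s_lc gB projB proj_g_inc subr0 glc projlc.
- by move=> a; rewrite /beta s_nij gB projB proj_g_inc subr0 gnij projnij.
- by move=> p; rewrite /beta /betai s_proj g'B gK projB Hs proj_g'_inc subr0.
- by move=> p; rewrite /beta /betai s_proj gB g'K projB Hs proj_g_inc subr0.
Qed.

Lemma PiEq_ab : PiEq inc proj s g alpha beta.
Proof. by split=> // h; rewrite inc_alpha. Qed.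
End Aut.

Lemma part3 g : AutH inc g -> exists alpha alphai beta betai,
  [/\ is_aut alpha alphai, is_aut beta betai & PiEq inc proj s g alpha beta].
Proof.
case=> Mg [g' gK g'K] gi gi'.
exists (alpha g), (alphai g'), (beta g), (betai g'); split.
- exact: alpha_aut.
- exact: beta_aut.
- exact: PiEq_ab.
Qed.

Lemma part4a (al ali : H -> H) (be bei : L -> L) g :
  is_aut al ali -> is_aut be bei -> AutH inc g -> PiEq inc proj s g al be ->
  nab_equiv (fun p q => map al (chi (bei p) (bei q))) chi
    (fun p h => map al (rho (bei p) (ali h))) rho (fun p => al (phi (bei p))) phi.
Proof.
move=> Aal Abe [Mg _ _ _] [P1 P2].
case: (Aal) => [[alL all aln] alK aliK].
have al0 : al 0 = 0 := dl0 alL.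
case: (inv_morph Abe) => [[biD biZ bid] bil bin].
case: (Abe) => _ beK beiK.
case: (Mg) => [[gD gZ gd] glc gnij].
have gB x y : g (x - y) = g x - g y by case: Mg => hd _ _; exact: (dlB hd x y).
pose tau p := hof (g (s (bei p))).
have inc_tau p : inc (tau p) = g (s (bei p)) - s p by rewrite Hhof P2 beiK.
have gsb p : g (s (bei p)) = s p + inc (tau p) by rewrite inc_tau subrKC.
exists tau; split.
- split.
  + by move=> x y; apply: Iinc; rewrite incD !inc_tau biD !sD gD opprD addrACA.
  + by move=> k x; apply: Iinc; rewrite incZ !inc_tau biZ !sZ gZ scalerBr.
  + by move=> x; apply: Iinc; rewrite incd !inc_tau bid !sd gd (derB LE).
- move=> p h n; rewrite (pco_map al0); apply: Iinc.
  rewrite incB -P1 !Hrho glc gsb P1 aliK inclc (lcDl LE).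
  by rewrite addrAC subrr add0r.
- move=> p q n; rewrite (pco_map al0); apply: Iinc.
  rewrite !(incB, incD, incN) -P1 !Hchi gB glc !gsb -bil gsb inclc Hrho -lc_inc_s.
  rewrite !(lcDl LE, lcDr LE).
  exact: Z1.
- move=> p; apply: Iinc.
  rewrite !incB -P1 !Hphi gB gnij gsb -bin gsb incnij.
  case: NE => _ [[nD _ _] _]; rewrite nD.
  exact: Z2.
Qed.

Lemma rhoD p x y n : pco (rho p (x + y)) n = pco (rho p x) n + pco (rho p y) n.
Proof. by apply: Iinc; rewrite incD !Hrho incD (lcDr LE). Qed.

Lemma lc_si p1 h1 p2 h2 n : lc (s p1 + inc h1) (s p2 + inc h2) n =
  s (lc p1 p2 n) + inc (pco (chi p1 p2) n + pco (rho p1 h2) n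
     - psubst (@der _ H) (rho p2 h1) n + lc h1 h2 n).
Proof.
rewrite !(lcDl LE, lcDr LE) !(incD, incN) Hchi Hrho -lc_inc_s inclc.
exact: Z3.
Qed.

Lemma nij_si p h : nij (s p + inc h) = s (nij p) + inc (phi p + nij h).
Proof.
case: NE => _ [[nD _ _] _]; rewrite nD incD incnij Hphi addrA; congr (_ + _).
by rewrite addrC subrK.
Qed.

Lemma part4b (al ali : H -> H) (be bei : L -> L) :
  is_aut al ali -> is_aut be bei ->
  nab_equiv (fun p q => map al (chi (bei p) (bei q))) chi
    (fun p h => map al (rho (bei p) (ali h))) rho (fun p => al (phi (bei p))) phi ->
  exists g, AutH inc g /\ PiEq inc proj s g al be.
Proof.
move=> Aal Abe [tau [tL Crho Cchi Cphi]].
case: (Aal) => [[alL all aln] alK aliK].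
have [alD alZ ald] := alL.
have al0 : al 0 = 0 := dl0 alL.
case: (Abe) => [[beL bel ben] beK beiK].
have [beD beZ bed] := beL.
have be0 : be 0 = 0 := dl0 beL.
case: (inv_morph Abe) => [[biD biZ bid] bil bin].
have [tD tZ td] := tL.
have t0 : tau 0 = 0 := dl0 tL.
have LH' : is_LCA H := NH.1.
have [[nD nZ nd] _] := NH.2.
pose g e := s (be (proj e)) + inc (tau (be (proj e)) + al (hof e)).
pose g' e := s (bei (proj e)) + inc (ali (hof e - tau (proj e))).
have g_si p h : g (s p + inc h) = s (be p) + inc (tau (be p) + al h).
  by rewrite /g proj_si hof_si.
have g'_si p h : g' (s p + inc h) = s (bei p) + inc (ali (h - tau p)).
  by rewrite /g' proj_si hof_si.
have g_inc h : g (inc h) = inc (al h).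
  have -> : inc h = s 0 + inc h by rewrite s0 add0r.
  by rewrite g_si be0 t0 s0 add0r add0r.
have ginK : cancel g g'.
  move=> e; rewrite (decomp e); move: (proj e) (hof e) => p h.
  by rewrite g_si g'_si beK [tau _ + _]addrC addrK alK.
have gK' : cancel g' g.
  move=> e; rewrite (decomp e); move: (proj e) (hof e) => p h.
  by rewrite g'_si g_si beiK aliK subrKC.
exists g; split; last first.
  split=> // p; have -> : s p = s p + inc 0 by rewrite inc0 addr0.
  by rewrite g_si proj_si.
split.
- split; first split.
  + move=> e1 e2; rewrite (decomp e1) (decomp e2).
    move: (proj e1) (hof e1) (proj e2) (hof e2) => p1 h1 p2 h2.
    have -> : s p1 + inc h1 + (s p2 + inc h2) = s (p1 + p2) + inc (h1 + h2).
      by rewrite sD incD addrACA.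
    rewrite !g_si beD sD tD alD [RHS]addrACA -incD; congr (_ + inc _).
    by rewrite addrACA.
  + move=> k e; rewrite (decomp e); move: (proj e) (hof e) => p h.
    have -> : k *: (s p + inc h) = s (k *: p) + inc (k *: h).
      by rewrite sZ incZ scalerDr.
    by rewrite !g_si beZ sZ tZ alZ -scalerDr incZ scalerDr.
  + move=> e; rewrite (decomp e); move: (proj e) (hof e) => p h.
    have -> : der (s p + inc h) = s (der p) + inc (der h).
      by rewrite (derD LE) sd incd.
    by rewrite !g_si bed sd td ald (derD LE) -incd (derD LH').
  + move=> e1 e2 n; rewrite (decomp e1) (decomp e2).
    move: (proj e1) (hof e1) (proj e2) (hof e2) => p1 h1 p2 h2.
    rewrite !g_si !lc_si g_si bel; congr (_ + inc _).
    have Echi : al (pco (chi p1 p2) n) = lc (tau (be p1)) (tau (be p2)) n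
        - tau (lc (be p1) (be p2) n) + pco (rho (be p1) (tau (be p2))) n
        - psubst (@der _ H) (rho (be p2) (tau (be p1))) n + pco (chi (be p1) (be p2)) n.
      by apply/eqP; rewrite -subr_eq -Cchi !beK (pco_map al0).
    have Erho p h m : al (pco (rho p h) m) = pco (rho (be p) (al h)) m + lc (tau (be p)) (al h) m.
      by apply/eqP; rewrite addrC -subr_eq -Crho beK alK (pco_map al0).
    have Epsub : al (psubst (@der _ H) (rho p2 h1) n) = psubst (@der _ H) (rho (be p2) (al h1)) n
        + psubst (@der _ H) (brk (tau (be p2)) (al h1)) n.
      rewrite (psubst_map _ _ alL); apply: psubst_add; first exact: derD.
      by move=> m; rewrite (pco_map al0) Erho.
    have alN x : al (- x) = - al x by exact: (dlN alL x).
    rewrite !alD alN Echi Erho Epsub all rhoD.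
    rewrite (psubst_add _ (derD LH') (rhoD (be p2) (tau (be p1)) (al h1))).
    rewrite (lcDl LH') !(lcDr LH') [lc (al h1) (tau _) n](lc_skew LH').
    exact: Z5.
  + move=> e; rewrite (decomp e); move: (proj e) (hof e) => p h.
    rewrite !g_si !nij_si g_si ben; congr (_ + inc _).
    have Ephi : al (phi p) = nij (tau (be p)) - tau (nij (be p)) + phi (be p).
      by apply/eqP; rewrite -subr_eq -Cphi beK.
    by rewrite alD Ephi aln nD; exact: Z4.
- by exists g'.
- by move=> h; exists (al h); rewrite g_inc.
- by move=> h'; exists (ali h'); rewrite g_inc aliK.
Qed.

End Main.

End Aux.

Theorem theorem6p6 (K : fieldType) (H E L : NLCA K)
    (inc : H -> E) (proj : E -> L) (s : L -> E)
    (chi : L -> L -> seq H) (rho : L -> H -> seq H) (phi : L -> H) :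
  (* the three Nijenhuis Lie conformal algebras *)
  is_NLCA H -> is_NLCA E -> is_NLCA L ->
  (* the short exact sequence 0 -> H_Q -> E_R -> L_N -> 0 of morphisms *)
  nmorph inc -> nmorph proj ->
  injective inc -> (forall x : L, exists e : E, proj e = x) ->
  (forall e : E, proj e = 0 <-> exists h : H, e = inc h) ->
  (* a C[∂]-linear section of proj *)
  dlinear (@der _ L) (@der _ E) s -> (forall p, proj (s p) = p) ->
  (* the induced χ, ρ, Φ (H-valued, read through the injection inc) *)
  (forall p q n, inc (pco (chi p q) n) = lc (s p) (s q) n - s (lc p q n)) ->
  (forall p h n, inc (pco (rho p h) n) = lc (s p) (inc h) n) ->
  (forall p, inc (phi p) = nij (s p) - s (nij p)) ->
  [/\ (* exactness at Aut^{L,H}_H(E_R): inc is the inclusion into Aut_H(E_R) *)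
      (forall g, AutLH inc proj s g -> AutH inc g),
      (* exactness at Aut_H(E_R): ker Π = Aut^{L,H}_H(E_R) *)
      (forall g, AutH inc g -> (PiEq inc proj s g id id <-> AutLH inc proj s g)),
      (* Π is well defined with values in Aut(H_Q) × Aut(L_N) *)
      (forall g, AutH inc g -> exists alpha alphai beta betai,
          [/\ is_aut alpha alphai, is_aut beta betai & PiEq inc proj s g alpha beta])
    & (* exactness at Aut(H_Q) × Aut(L_N): Im Π = {(α,β) | 𝔚(α,β) trivial} *)
      (forall (alpha alphai : H -> H) (beta betai : L -> L),
          is_aut alpha alphai -> is_aut beta betai ->
          ((exists g, AutH inc g /\ PiEq inc proj s g alpha beta) <->
           nab_equiv
             (fun p q => map alpha (chi (betai p) (betai q)))
             chi
             (fun p h => map alpha (rho (betai p) (alphai h)))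
             rho
             (fun p => alpha (phi (betai p)))
             phi))].
Proof.
move=> NH NE NL Minc Mproj Iinc Hsurj Hker Ds Hs Hchi Hrho Hphi.
have hofex : forall e : E, exists h : H, inc h = e - s (proj e).
  move=> e; have : proj (e - s (proj e)) = 0.
    by case: Mproj => hd _ _; rewrite (Aux.dlB hd) Hs subrr.
  by case/Hker => h ->; exists h.
pose hof e := proj1_sig (constructive_indefinite_description _ (hofex e)).
have Hhof : forall e, inc (hof e) = e - s (proj e).
  by move=> e; exact: (proj2_sig (constructive_indefinite_description _ (hofex e))).
split.
- by move=> g [].
- by move=> g Ag; split=> [Pi|[]] //.
- by move=> g Ag; exact: (Aux.part3 Minc Mproj Iinc Hker Ds Hs Hchi Hphi Hhof Ag).
- move=> al ali be bei Aal Abe; split.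
  + by case=> g [Ag P]; exact: (Aux.part4a NE Minc Iinc Ds Hchi Hrho Hphi Hhof Aal Abe Ag P).
  + by move=> Heq; exact: (Aux.part4b NH NE Minc Mproj Iinc Hker Ds Hs Hchi Hrho Hphi Hhof Aal Abe Heq).
Qed.
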